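(* Let $G$ be an infinite, connected, locally finite graph, let $P$ be a metric ray of $G$ with ordered vertex set $\{u_0,u_1,u_2,\dots\}$, and let $S=\{x_1,\dots,x_n\}$ be a finite set of vertices of $G$. Then there exists an integer $i_0\ge 0$ such that for every $k\ge 0$, $$r(u_{i_0+k}\mid S)=r(u_{i_0}\mid S)+(k,k,\dots,k),$$ where $(k,\dots,k)$ has $n=|S|$ entries.
   Context: $d$ denotes shortest-path distance in $G$. For a finite ordered set $S=\{x_1,\dots,x_n\}$ of vertices, $r(u\mid S)=(d(u,x_1),\dots,d(u,x_n))$. A metric ray of $G$ with endpoint $u_0$ is an infinite subgraph $P$ whose vertices admit an ordering $u_0,u_1,u_2,\dots$ (all distinct) with $u_k$ adjacent to $u_{k+1}$ in $P$ for all $k\ge 0$ and $d_G(u_0,u_k)=k$ for all $k\ge0$. *)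

(* Defs.v *)
From Stdlib Require Import List Arith ClassicalEpsilon.
Import ListNotations.

Section Graph.
Context {V : Type} (adj : V -> V -> Prop).

Inductive walk : V -> V -> nat -> Prop :=
| walk0 : forall v, walk v v 0
| walkS : forall u w v n, adj u w -> walk w v n -> walk u v (S n).

Definition simple_graph : Prop :=
  (forall u v, adj u v -> adj v u) /\ (forall u, ~ adj u u).

Definition connected : Prop := forall u v, exists n, walk u v n.

Definition locally_finite : Prop :=
  forall v, exists l : list V, forall w, adj v w -> In w l.

Definition infinite_graph : Prop := ~ exists l : list V, forall v, In v l.

Definition is_dist (u v : V) (m : nat) : Prop :=
  walk u v m /\ forall k, walk u v k -> m <= k.

(* shortest-path distance d_G(u,v) (well defined when G is connected) *)
Definition dist (u v : V) : nat := epsilon (inhabits 0) (fun m => is_dist u v m).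

(* metric representation r(u | S) for an ordered set S = [x_1; ...; x_n] *)
Definition rep (u : V) (S : list V) : list nat := map (fun x => dist u x) S.

Definition metric_ray (u : nat -> V) : Prop :=
  (forall i j, u i = u j -> i = j) /\
  (forall k, adj (u k) (u (S k))) /\
  (forall k, dist (u 0) (u k) = k).

End Graph.

(* Main.v *)
Require Import Defs.
From Stdlib Require Import List Arith Lia Classical ClassicalEpsilon.

Lemma min_exists (P : nat -> Prop) n : P n -> exists m, P m /\ forall k, P k -> m <= k.
Proof.
  induction n as [n IH] using (well_founded_induction lt_wf). intro Hn.
  destruct (classic (exists k, k < n /\ P k)) as [[k [Hk Pk]]|H].
  - exact (IH k Hk Pk).
  - exists n; split; auto. intros k Pk. destruct (le_lt_dec n k); auto.
    exfalso; apply H; eauto.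
Qed.

Section W.
Context {V : Type} (adj : V -> V -> Prop).

Lemma walk_app a b n : walk adj a b n -> forall c m, walk adj b c m -> walk adj a c (n+m).
Proof. induction 1; intros; simpl; auto. econstructor; eauto. Qed.

Lemma walk_snoc a b n c : walk adj a b n -> adj b c -> walk adj a c (S n).
Proof. intros H Ha. replace (S n) with (n+1) by lia. eapply walk_app; eauto.
  econstructor; eauto. constructor. Qed.

Lemma walk_rev (Hs : forall x y, adj x y -> adj y x) a b n : walk adj a b n -> walk adj b a n.
Proof. induction 1. constructor. eapply walk_snoc; eauto. Qed.

Hypothesis Hc : connected adj.
Hypothesis Hs : forall x y, adj x y -> adj y x.

Lemma dist_spec a b : is_dist adj a b (dist adj a b).
Proof.
  unfold dist. apply epsilon_spec. destruct (Hc a b) as [n Hn].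
  destruct (min_exists (fun m => walk adj a b m) n Hn) as [m [H1 H2]].
  exists m; split; auto.
Qed.

Lemma dist_le a b n : walk adj a b n -> dist adj a b <= n.
Proof. intro H. apply (proj2 (dist_spec a b)); auto. Qed.

Lemma dist_sym a b : dist adj a b = dist adj b a.
Proof.
  apply Nat.le_antisymm; apply dist_le; apply walk_rev; auto; apply dist_spec.
Qed.

Lemma dist_tri a b c : dist adj a c <= dist adj a b + dist adj b c.
Proof. apply dist_le. eapply walk_app; apply dist_spec. Qed.

Lemma dist_adj a b c : adj a b -> dist adj b c <= S (dist adj a c).
Proof. intro H. apply dist_le. econstructor. apply Hs; eauto. apply dist_spec. Qed.
End W.

Lemma stab_m m : forall h : nat -> nat, (forall k, h (S k) <= h k) -> h 0 <= m ->
  exists N, forall k, h (N + k) = h N.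
Proof.
  induction m; intros h Hm H0.
  - exists 0. intro k. simpl. assert (forall j, h j <= h 0).
    { induction j; auto. specialize (Hm j); lia. } specialize (H k); lia.
  - assert (Hmono : forall j i, h (i + j) <= h i).
    { induction j; intro i. rewrite Nat.add_0_r; auto.
      specialize (Hm (i+j)). rewrite Nat.add_succ_r. specialize (IHj i); lia. }
    destruct (classic (exists k, h k < h 0)) as [[k Hk]|Hn].
    + destruct (IHm (fun j => h (k + j))) as [N HN].
      * intro j. rewrite Nat.add_succ_r. apply Hm.
      * rewrite Nat.add_0_r. lia.
      * exists (k+N). intro j. rewrite <- Nat.add_assoc. apply HN.
    + exists 0. intro k. simpl. specialize (Hmono k 0). simpl in Hmono.
      destruct (Nat.eq_dec (h k) (h 0)); auto. exfalso; apply Hn; exists k; lia.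
Qed.

Lemma stab (h : nat -> nat) : (forall k, h (S k) <= h k) ->
  exists N, forall M k, N <= M -> h (M + k) = h M.
Proof.
  intro Hm. destruct (stab_m (h 0) h Hm (le_n _)) as [N HN].
  exists N. intros M k HM. replace M with (N + (M - N)) by lia.
  rewrite <- Nat.add_assoc, !HN. auto.
Qed.

Theorem lemma4 (V : Type) (adj : V -> V -> Prop)
  (Hsimple : simple_graph adj) (Hinf : infinite_graph (V:=V))
  (Hconn : connected adj) (Hlf : locally_finite adj)
  (u : nat -> V) (Hray : metric_ray adj u)
  (S : list V) (HS : NoDup S) :
  exists i0 : nat, forall k : nat,
    rep adj (u (i0 + k)) S = map (fun m => m + k) (rep adj (u i0) S).
Proof.
  destruct Hsimple as [Hs _]. destruct Hray as [_ [Hadj Hd]].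
  assert (Hlow : forall x j, j <= dist adj (u j) x + dist adj (u 0) x).
  { intros x j. rewrite <- (Hd j) at 1.
    pose proof (dist_tri adj Hconn (u 0) x (u j)).
    rewrite (dist_sym adj Hconn Hs x (u j)) in H. lia. }
  assert (Hx : forall x, exists N, forall M k, N <= M ->
     dist adj (u (M + k)) x = dist adj (u M) x + k).
  { intro x. remember (dist adj (u 0) x) as c.
    destruct (stab (fun j => dist adj (u j) x + c - j)) as [N HN].
    { intro k. pose proof (dist_adj adj Hconn Hs (u k) (u (Datatypes.S k)) x (Hadj k)).
      pose proof (Hlow x k). pose proof (Hlow x (Datatypes.S k)). lia. }
    exists N. intros M k HM. specialize (HN M k HM). simpl in HN.
    pose proof (Hlow x M). pose proof (Hlow x (M+k)). lia. }
  assert (Hall : exists N, forall x, In x S -> forall M k, N <= M ->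
     dist adj (u (M + k)) x = dist adj (u M) x + k).
  { clear HS. induction S as [|y S IH].
    - exists 0; intros x [].
    - destruct IH as [N1 H1]. destruct (Hx y) as [N2 H2].
      exists (N1 + N2). intros x [<-|Hin] M k HM.
      + apply H2; lia.
      + apply H1; auto; lia. }
  destruct Hall as [N HN]. exists N. intro k. unfold rep. rewrite map_map.
  apply map_ext_in. intros x Hin. apply HN; auto.
Qed.
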